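(* Let $W=e^{-q}$ be the bivariate Freud weight and $\{\mathbb{P}_n\}$ an orthonormal polynomial system for it, with matrices $G^n_k$, $G_n$ as in the context. Write $x_1=x$, $x_2=y$, and for $i=1,2$ let $F^n_{m,i}$ ($(n+1)\times(m+1)$ real matrices) be the coefficients of the expansion $x_i^2\mathbb{P}_n=\sum_{m=0}^{n+2}F^n_{m,i}\mathbb{P}_m$. Then for $n\geqslant2$ and $i=1,2$, $$F^n_{n,i}=G^n_{n-2}G_{n-2}^{-1}(F^n_{n-2,i})^T-F^n_{n+2,i}G^{n+2}_nG_n^{-1}.$$
   Context: Parameters $a_{4,0},a_{2,2},a_{0,4}\geqslant0$, $a_{2,0},a_{0,2}\in\mathbb{R}$, $a_{4,0}+a_{2,2}>0$, $a_{2,2}+a_{0,4}>0$; $q(x,y)=a_{4,0}x^4+a_{2,2}x^2y^2+a_{0,4}y^4+a_{2,0}x^2+a_{0,2}y^2$, $W=e^{-q}$, inner product $(f,g)=\iint_{\mathbb{R}^2}fgW\,dx\,dy$ (entrywise on vectors). $\mathbb{X}_n=(x^n,x^{n-1}y,\dots,y^n)^T$. An orthonormal polynomial system: column vectors $\mathbb{P}_n=(P_{n,0},\dots,P_{n,n})^T$ of linearly independent polynomials of exact total degree $n$ with $(\mathbb{P}_n,\mathbb{P}_m^T)=\delta_{nm}I_{n+1}$ (the entries of all $\mathbb{P}_m$ form a basis of all polynomials, so the expansion exists and is unique). Write $\mathbb{P}_n=\sum_kG^n_k\mathbb{X}_k$ with constant $(n+1)\times(k+1)$ matrices, $G_n:=G^n_n$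 invertible. *)

(* Defs.v *)
From HB Require Import structures.
From mathcomp Require Import all_boot all_order all_algebra.
From mathcomp Require Import all_classical all_reals all_analysis.
Set Implicit Arguments. Unset Strict Implicit. Unset Printing Implicit Defensive.
Import Order.TTheory GRing.Theory Num.Theory.
Import numFieldNormedType.Exports.
Local Open Scope classical_set_scope.
Local Open Scope ring_scope.

Definition leb2 (R : realType) :=
  ((@lebesgue_measure R) \x (@lebesgue_measure R))%E.

Definition freud_q (R : realType) (a40 a22 a04 a20 a02 : R) (z : R * R) : R :=
  a40 * z.1 ^+ 4 + a22 * z.1 ^+ 2 * z.2 ^+ 2 + a04 * z.2 ^+ 4
  + a20 * z.1 ^+ 2 + a02 * z.2 ^+ 2.

Definition freud_W (R : realType) (a40 a22 a04 a20 a02 : R) (z : R * R) : R :=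
  expR (- freud_q a40 a22 a04 a20 a02 z).

Definition Xvec (R : realType) (k : nat) (z : R * R) : 'cV[R]_k.+1 :=
  \col_(l < k.+1) (z.1 ^+ (k - l) * z.2 ^+ l).

(* Coefficient family: G n k : 'M_(n+1,k+1) (only k <= n is used). *)
Definition coefFamily (R : realType) := forall n k : nat, 'M[R]_(n.+1, k.+1).

Definition Pvec (R : realType) (G : coefFamily R) (n : nat) (z : R * R)
  : 'cV[R]_n.+1 :=
  \sum_(k < n.+1) (G n k *m Xvec k z).

Definition orthonormal_system (R : realType) (W : R * R -> R)
  (G : coefFamily R) : Prop :=
  forall (n m : nat) (j : 'I_n.+1) (l : 'I_m.+1),
    (@leb2 R).-integrable setT
       (fun z => ((Pvec G n z j 0 * Pvec G m z l 0 * W z)%R)%:E) /\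
    Rintegral (@leb2 R) setT (fun z => Pvec G n z j 0 * Pvec G m z l 0 * W z)
      = (if (n == m) && (val j == val l) then 1 else 0).

Definition xcoord (R : realType) (i : 'I_2) (z : R * R) : R :=
  if val i == 0%N then z.1 else z.2.

(* Main.v *)
Require Import Defs.
From HB Require Import structures.
From mathcomp Require Import all_boot all_order all_algebra.
From mathcomp Require Import all_classical all_reals all_analysis measurable_realfun.
From mathcomp Require Import ring lra.
From mathcomp Require Import zify.
Import Order.TTheory GRing.Theory Num.Theory.
Local Open Scope ring_scope.
Local Open Scope classical_set_scope.
Set Implicit Arguments. Unset Strict Implicit. Unset Printing Implicit Defensive.
Definition negz (R : realType) (z : measurableTypeR R * measurableTypeR R) :
  measurableTypeR R * measurableTypeR R := (- z.1, - z.2).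
Lemma mnegz (R : realType) : measurable_fun setT (@negz R).
Proof.
apply: measurable_fun_pair.
- apply: measurableT_comp; [exact: oppr_measurable| exact: measurable_fst].
- apply: measurableT_comp; [exact: oppr_measurable| exact: measurable_snd].
Qed.
Lemma leb2_negz (R : realType) (X : set (measurableTypeR R * measurableTypeR R)) :
  measurable X -> @leb2 R X = pushforward (@leb2 R) (@negz R) X.
Proof.
move=> mX.
have := @product_measure_unique _ _ _ _ R lebesgue_measure lebesgue_measure
  (measure_function_pushforward__canonical__measure_function_Measure (@leb2 R) (@mnegz R)).
apply => // A B mA mB /=.
rewrite /pushforward.
have -> : @negz R @^-1` (A `*` B) = ((-%R) @^-1` A) `*` ((-%R) @^-1` B).
  by apply/seteqP; split => -[x y].
rewrite /leb2 product_measure1E.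
- by rewrite -!(lebesgue_measureN) //.
- rewrite -[X in measurable X]setTI. exact: (@oppr_measurable R setT measurableT A mA).
- rewrite -[X in measurable X]setTI. exact: (@oppr_measurable R setT measurableT B mB).
Qed.

Lemma Rint_odd (R : realType) (g : R * R -> R) :
  (@leb2 R).-integrable setT (EFin \o g) ->
  (forall z, g (- z.1, - z.2) = - g z) ->
  Rintegral (@leb2 R) setT g = 0.
Proof.
move=> ig godd.
have mg : measurable_fun setT (EFin \o g) := measurable_int _ ig.
have ign : (@leb2 R).-integrable (@negz R @^-1` setT) ((EFin \o g) \o @negz R).
  rewrite preimage_setT.
  have ig' := integrableN ig.
  apply: eq_integrable ig' => // x _ /=.
  by rewrite /negz godd.
have E : Rintegral (@leb2 R) setT g = Rintegral (@leb2 R) setT (fun x => -1 * g x).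
  rewrite /Rintegral; congr fine.
  rewrite (eq_measure_integral (measure_function_pushforward__canonical__measure_function_Measure (@leb2 R) (@mnegz R))); last first.
    by move=> A mA _; apply: leb2_negz.
  rewrite (@integral_pushforward _ _ _ _ R (@negz R) (@mnegz R) (@leb2 R) setT (EFin \o g) mg ign) //.
  rewrite preimage_setT; apply: eq_integral => x _ /=.
  by rewrite /negz godd mulN1r.
move: E; rewrite RintegralZl // => E.
have : 2 * Rintegral (@leb2 R) setT g = 0 by rewrite mulr2n mulrDl mul1r {1}E; ring.
by move/eqP; rewrite mulf_eq0 pnatr_eq0 orFb => /eqP.
Qed.
Section Layer.
Variable R : realType.
Variable W : R * R -> R.

Definition Iw (h : R * R -> R) :=
  (@leb2 R).-integrable setT (fun z => (h z * W z)%:E).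
Definition Jw (h : R * R -> R) :=
  Rintegral (@leb2 R) setT (fun z => h z * W z).

Lemma Iw_add h1 h2 : Iw h1 -> Iw h2 -> Iw (fun z => h1 z + h2 z).
Proof.
move=> i1 i2; have := integrableD measurableT i1 i2.
apply: eq_integrable => // z _ /=; by rewrite mulrDl EFinD.
Qed.

Lemma Jw_add h1 h2 : Iw h1 -> Iw h2 ->
  Jw (fun z => h1 z + h2 z) = Jw h1 + Jw h2.
Proof.
move=> i1 i2; rewrite /Jw -RintegralD //.
by apply: eq_Rintegral => z _; rewrite mulrDl.
Qed.

Lemma Iw_scale c h : Iw h -> Iw (fun z => c * h z).
Proof.
move=> i; have := integrableZl measurableT c i.
apply: eq_integrable => // z _ /=; by rewrite -EFinM mulrA.
Qed.

Lemma Jw_scale c h : Iw h -> Jw (fun z => c * h z) = c * Jw h.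
Proof.
move=> i; rewrite /Jw -RintegralZl //.
by apply: eq_Rintegral => z _; rewrite mulrA.
Qed.

Lemma Iw0 : Iw (fun _ => 0).
Proof.
have := @integrable0 _ _ R (@leb2 R) setT.
by apply: eq_integrable => // z _ /=; rewrite mul0r.
Qed.

Lemma Jw0 : Jw (fun _ => 0) = 0.
Proof.
rewrite /Jw (_ : (fun z : R * R => 0 * W z) = fun _ => 0 * 0).
  by rewrite RintegralZl // ?mul0r //; apply: integrable0.
by apply/funext => z; rewrite !mul0r.
Qed.

Lemma Iw_sum (I : Type) (s : seq I) (h : I -> R * R -> R) :
  (forall k, Iw (h k)) -> Iw (fun z => \sum_(k <- s) h k z).
Proof.
move=> hi; elim: s => [|x s IH].
  by under eq_fun do rewrite big_nil; exact: Iw0.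
under eq_fun do rewrite big_cons.
exact: Iw_add.
Qed.

Lemma Jw_sum (I : Type) (s : seq I) (h : I -> R * R -> R) :
  (forall k, Iw (h k)) ->
  Jw (fun z => \sum_(k <- s) h k z) = \sum_(k <- s) Jw (h k).
Proof.
move=> hi; elim: s => [|x s IH].
  by under eq_fun do rewrite big_nil; rewrite big_nil Jw0.
under eq_fun do rewrite big_cons.
by rewrite big_cons Jw_add ?IH //; apply: Iw_sum.
Qed.

End Layer.
Section Mat.
Variable R : realType.
Variable W : R * R -> R.

Definition Intg r s (f : R * R -> 'cV[R]_r) (g : R * R -> 'cV[R]_s) :=
  forall a b, Iw W (fun z => f z a 0 * g z b 0).
Definition ip r s (f : R * R -> 'cV[R]_r) (g : R * R -> 'cV[R]_s) : 'M[R]_(r, s) :=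
  \matrix_(a, b) Jw W (fun z => f z a 0 * g z b 0).

Lemma Intg_sym r s (f : R * R -> 'cV[R]_r) (g : R * R -> 'cV[R]_s) :
  Intg f g -> Intg g f.
Proof.
move=> h a b; have := h b a; congr (Iw W _); apply/funext => z; exact: mulrC.
Qed.

Lemma ip_sym r s (f : R * R -> 'cV[R]_r) (g : R * R -> 'cV[R]_s) :
  ip g f = (ip f g)^T.
Proof.
apply/matrixP => a b; rewrite !mxE; congr (Jw W _); apply/funext => z; exact: mulrC.
Qed.

Lemma Lin1 r s (k : nat -> nat) (h : forall l, R * R -> 'cV[R]_(k l))
  (E : forall l, 'M[R]_(r, k l)) e (g : R * R -> 'cV[R]_s) :
  (forall l, (l < e)%N -> Intg (h l) g) ->
  Intg (fun z => \sum_(l < e) E l *m h l z) g /\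
  ip (fun z => \sum_(l < e) E l *m h l z) g = \sum_(l < e) E l *m ip (h l) g.
Proof.
move=> hI.
have ent : forall a b, (fun z => (\sum_(l < e) E l *m h l z) a 0 * g z b 0) =
   (fun z => \sum_(l < e) \sum_(c < k l) E l a c * (h l z c 0 * g z b 0)).
  move=> a b; apply/funext => z.
  rewrite summxE mulr_suml; apply: eq_bigr => l _.
  by rewrite mxE mulr_suml; apply: eq_bigr => c _; rewrite mulrA.
split.
  move=> a b; rewrite ent; apply: Iw_sum => l; apply: Iw_sum => c.
  by apply: Iw_scale; apply: hI.
apply/matrixP => a b; rewrite !mxE ent Jw_sum; last first.
  by move=> l; apply: Iw_sum => c; apply: Iw_scale; apply: hI.
rewrite summxE; apply: eq_bigr => l _; rewrite Jw_sum; last first.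
  by move=> c; apply: Iw_scale; apply: hI.
rewrite mxE; apply: eq_bigr => c _; rewrite Jw_scale ?mxE //; exact: hI.
Qed.

Lemma Lin1_one r s t (A : 'M[R]_(r, t)) (f : R * R -> 'cV[R]_t)
  (g : R * R -> 'cV[R]_s) :
  Intg f g -> Intg (fun z => A *m f z) g /\ ip (fun z => A *m f z) g = A *m ip f g.
Proof.
move=> hI.
have := @Lin1 r s (fun _ => t) (fun _ => f) (fun _ => A) 1 g (fun _ _ => hI).
have -> : (fun z => \sum_(l < 1) A *m f z) = (fun z => A *m f z).
  by apply/funext => z; rewrite big_ord1.
by rewrite big_ord1.
Qed.

Lemma Add1 r s (f1 f2 : R * R -> 'cV[R]_r) (g : R * R -> 'cV[R]_s) :
  Intg f1 g -> Intg f2 g ->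
  Intg (fun z => f1 z + f2 z) g /\
  ip (fun z => f1 z + f2 z) g = ip f1 g + ip f2 g.
Proof.
move=> h1 h2.
have ent : forall a b, (fun z => (f1 z + f2 z) a 0 * g z b 0) =
   (fun z => f1 z a 0 * g z b 0 + f2 z a 0 * g z b 0).
  by move=> a b; apply/funext => z; rewrite mxE mulrDl.
split; first by move=> a b; rewrite ent; apply: Iw_add.
by apply/matrixP => a b; rewrite !mxE ent Jw_add.
Qed.

Lemma Lin2 r s (k : nat -> nat) (h : forall l, R * R -> 'cV[R]_(k l))
  (E : forall l, 'M[R]_(s, k l)) e (f : R * R -> 'cV[R]_r) :
  (forall l, (l < e)%N -> Intg f (h l)) ->
  Intg f (fun z => \sum_(l < e) E l *m h l z) /\
  ip f (fun z => \sum_(l < e) E l *m h l z) = \sum_(l < e) ip f (h l) *m (E l)^T.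
Proof.
move=> hI.
have [I1 E1] := @Lin1 s r k h E e f (fun l hl => Intg_sym (hI l hl)).
split; first exact: Intg_sym.
rewrite ip_sym E1 linear_sum /=; apply: eq_bigr => l _.
by rewrite trmx_mul -ip_sym.
Qed.

End Mat.
Section Orth.
Variable R : realType.
Variable W : R * R -> R.
Variable G : coefFamily R.
Hypothesis hON : orthonormal_system W G.
Hypothesis hGinv : forall n : nat, G n n \in unitmx.

Lemma Intg_PP n m : Intg W (Pvec G n) (Pvec G m).
Proof. by move=> a b; exact: (hON a b).1. Qed.

Lemma ip_PPne n m : n != m -> ip W (Pvec G n) (Pvec G m) = 0.
Proof.
move=> hnm; apply/matrixP => a b; rewrite !mxE.
by rewrite /Jw (hON a b).2 (negbTE hnm).
Qed.

Lemma ip_PPeq n : ip W (Pvec G n) (Pvec G n) = 1%:M.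
Proof.
apply/matrixP => a b; rewrite !mxE.
by rewrite /Jw (hON a b).2 eqxx /= val_eqE; case: (a == b).
Qed.

Definition Sp r d (f : R * R -> 'cV[R]_r) :=
  exists D : forall j, 'M[R]_(r, j.+1),
    forall z, f z = \sum_(j < d) D j *m Pvec G j z.

Lemma Intg_S r s d e (f : R * R -> 'cV[R]_r) (g : R * R -> 'cV[R]_s) :
  Sp d f -> Sp e g -> Intg W f g.
Proof.
move=> [D hD] [E hE].
rewrite (_ : f = fun z => \sum_(j < d) D j *m Pvec G j z); last exact: funext.
rewrite (_ : g = fun z => \sum_(j < e) E j *m Pvec G j z); last exact: funext.
have Pg : forall j, Intg W (Pvec G j) (fun z => \sum_(j < e) E j *m Pvec G j z).
  move=> j.
  exact: (Lin2 (k := fun j => j.+1) (h := fun j => Pvec G j) E (fun l _ => Intg_PP (n:=j) (m:=l))).1.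
exact: (Lin1 (k := fun j => j.+1) (h := fun j => Pvec G j) D (fun j _ => Pg j)).1.
Qed.

Lemma ipS_coef r d (D : forall j, 'M[R]_(r, j.+1)) (f : R * R -> 'cV[R]_r) m :
  (forall z, f z = \sum_(j < d) D j *m Pvec G j z) -> (m < d)%N ->
  ip W f (Pvec G m) = D m.
Proof.
move=> hD hm.
rewrite (_ : f = fun z => \sum_(j < d) D j *m Pvec G j z); last exact: funext.
rewrite (Lin1 (k := fun j => j.+1) (h := fun j => Pvec G j) D (fun j _ => Intg_PP (n:=j) (m:=m))).2.
rewrite (bigD1 (Ordinal hm)) //= ip_PPeq mulmx1 big1 ?addr0 // => j hj.
rewrite ip_PPne ?mulmx0 //; apply: contraNneq hj => e; apply/eqP/val_inj.
Qed.

Lemma ipS0 r d (f : R * R -> 'cV[R]_r) m :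
  Sp d f -> (d <= m)%N -> ip W f (Pvec G m) = 0.
Proof.
move=> [D hD] hdm.
rewrite (_ : f = fun z => \sum_(j < d) D j *m Pvec G j z); last exact: funext.
rewrite (Lin1 (k := fun j => j.+1) (h := fun j => Pvec G j) D (fun j _ => Intg_PP (n:=j) (m:=m))).2.
rewrite big1 // => j _; rewrite ip_PPne ?mulmx0 //.
by rewrite neq_ltn (leq_trans (ltn_ord j) hdm).
Qed.

Lemma Sp0 r d : Sp d (fun _ => 0 : 'cV[R]_r).
Proof.
by exists (fun j => 0) => z; rewrite big1 // => j _; rewrite mul0mx.
Qed.

Lemma Sp_add r d (f g : R * R -> 'cV[R]_r) :
  Sp d f -> Sp d g -> Sp d (fun z => f z + g z).
Proof.
move=> [D hD] [E hE]; exists (fun j => D j + E j) => z.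
by rewrite hD hE -big_split /=; apply: eq_bigr => j _; rewrite mulmxDl.
Qed.

Lemma Sp_mul r t d (A : 'M[R]_(t, r)) (f : R * R -> 'cV[R]_r) :
  Sp d f -> Sp d (fun z => A *m f z).
Proof.
move=> [D hD]; exists (fun j => A *m D j) => z.
by rewrite hD mulmx_sumr; apply: eq_bigr => j _; rewrite mulmxA.
Qed.

Lemma Sp_sum r d K (f : nat -> R * R -> 'cV[R]_r) :
  (forall k, (k < K)%N -> Sp d (f k)) -> Sp d (fun z => \sum_(k < K) f k z).
Proof.
elim: K => [|K IH] hf.
  by rewrite (_ : (fun z => _) = fun _ => 0); [exact: Sp0|apply/funext => z; rewrite big_ord0].
rewrite (_ : (fun z => _) = fun z => \sum_(k < K) f k z + f K z); last first.
  by apply/funext => z; rewrite big_ord_recr.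
by apply: Sp_add; [apply: IH => k hk; apply: hf; apply: ltnW | exact: hf].
Qed.

Lemma Sp_mono r d d' (f : R * R -> 'cV[R]_r) :
  (d <= d')%N -> Sp d f -> Sp d' f.
Proof.
move=> hd [D hD]; exists (fun j => if (j < d)%N then D j else 0) => z.
rewrite hD (big_ord_widen d' (fun j => D j *m Pvec G j z)) // big_mkcond /=.
by apply: eq_bigr => j _; case: ifP => // _; rewrite mul0mx.
Qed.

Lemma Sp_P m : Sp m.+1 (Pvec G m).
Proof.
exists (fun j => \matrix_(a < m.+1, b < j.+1) ((j == m) && (val a == val b))%:R) => z.
rewrite big_ord_recr /= big1 ?add0r; last first.
  move=> j _; rewrite (_ : \matrix_(a, b) _ = 0) ?mul0mx //.
  by apply/matrixP => a b; rewrite !mxE (ltn_eqF (ltn_ord j)).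
apply/matrixP => a c; rewrite !mxE (bigD1 a) //= !mxE eqxx /= eqxx mul1r.
rewrite big1 ?addr0 // => b hb; rewrite mxE.
have -> : (val a == val b) = false by apply/negbTE; rewrite val_eqE eq_sym.
by rewrite mul0r.
Qed.

Lemma Xexp k z : Xvec k z = invmx (G k k) *m Pvec G k z +
  \sum_(l < k) (- (invmx (G k k) *m G k l)) *m Xvec l z.
Proof.
rewrite /Pvec big_ord_recr /= mulmxDr mulmxA mulVmx // mul1mx.
rewrite mulmx_sumr -addrA addrC -addrA -big_split /= big1 ?addr0 // => l _.
by rewrite mulNmx mulmxA addNr.
Qed.

Lemma Sp_X k : Sp k.+1 (Xvec k).
Proof.
elim/ltn_ind: k => k IH.
rewrite (_ : Xvec k = fun z => invmx (G k k) *m Pvec G k z +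
  \sum_(l < k) (- (invmx (G k k) *m G k l)) *m Xvec l z); last first.
  by apply/funext => z; exact: Xexp.
apply: Sp_add; first by apply: Sp_mul; exact: Sp_P.
apply: (Sp_sum (f := fun l z => (- (invmx (G k k) *m G k l)) *m Xvec l z)) => l hl.
by apply: Sp_mul; apply: (Sp_mono _ (IH l hl)); apply: ltnW.
Qed.


Lemma Intg_XP l m : Intg W (Xvec l) (Pvec G m).
Proof. exact: Intg_S (Sp_X l) (Sp_P m). Qed.

Lemma ipX_expand k m : ip W (Xvec k) (Pvec G m) =
  invmx (G k k) *m ip W (Pvec G k) (Pvec G m) +
  \sum_(l < k) (- (invmx (G k k) *m G k l)) *m ip W (Xvec l) (Pvec G m).
Proof.
have e : Xvec k = fun z => invmx (G k k) *m Pvec G k z +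
  \sum_(l < k) (- (invmx (G k k) *m G k l)) *m Xvec l z.
  by apply/funext => z; exact: Xexp.
have I1 := Lin1_one (invmx (G k k)) (Intg_S (Sp_P k) (Sp_P m)).
have I2 := Lin1 (k := fun l => l.+1) (h := fun l => Xvec l)
  (fun l => - (invmx (G k k) *m G k l)) (e := k) (fun l _ => @Intg_XP l m).
by rewrite e (Add1 I1.1 I2.1).2 I1.2 I2.2.
Qed.

Lemma ipXP_lt j m : (j < m)%N -> ip W (Xvec j) (Pvec G m) = 0.
Proof. by move=> hjm; exact: ipS0 (Sp_X j) hjm. Qed.

Lemma ipXP_eq m : ip W (Xvec m) (Pvec G m) = invmx (G m m).
Proof.
rewrite ipX_expand ip_PPeq mulmx1 big1 ?addr0 // => l _.
by rewrite ipXP_lt ?mulmx0.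
Qed.

Hypothesis hWeven : forall z : R * R, W (- z.1, - z.2) = W z.

Lemma Xvec_neg a (z : R * R) c : Xvec a (- z.1, - z.2) c 0 = (-1) ^+ a * Xvec a z c 0.
Proof.
rewrite !mxE /= (exprNn z.1) (exprNn z.2) mulrACA -exprD subnK //.
by rewrite -ltnS.
Qed.

Lemma ipXX_odd a b : odd (a + b) -> ip W (Xvec a) (Xvec b) = 0.
Proof.
move=> hab; apply/matrixP => c e; rewrite !mxE.
apply: Rint_odd; first exact: (Intg_S (Sp_X a) (Sp_X b) c e).
move=> z; rewrite !Xvec_neg hWeven mulrACA.
have -> : (-1) ^+ a * (-1) ^+ b = -1 :> R by rewrite -exprD -signr_odd hab expr1.
ring.
Qed.

Lemma ipXP_par m : ip W (Xvec m.+1) (Pvec G m) = 0.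
Proof.
pose Go := fun k => if odd (m + k) then G m k else 0.
pose Ge := fun k => if odd (m + k) then 0 else G m k.
pose Of := fun z => \sum_(k < m.+1) Go k *m Xvec k z.
pose Ef := fun z => \sum_(k < m.+1) Ge k *m Xvec k z.
have PEO : Pvec G m = fun z => Ef z + Of z.
  apply/funext => z; rewrite /Pvec /Ef /Of -big_split; apply: eq_bigr => k _.
  by rewrite /= -mulmxDl /Ge /Go; case: ifP; rewrite ?add0r ?addr0.
have SO : Sp m Of.
  rewrite (_ : Of = fun z => \sum_(k < m) Go k *m Xvec k z).
    apply: (Sp_sum (f := fun k z => Go k *m Xvec k z)) => k hk.
    by apply: Sp_mul; exact: (Sp_mono hk (Sp_X k)).
  apply/funext => z; rewrite /Of big_ord_recr /= /Go addnn odd_double /=.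
  by rewrite mul0mx addr0.
have SE : Sp m.+1 Ef.
  apply: (Sp_sum (f := fun k z => Ge k *m Xvec k z)) => k hk.
  by apply: Sp_mul; exact: (Sp_mono hk (Sp_X k)).
have IOX : forall l, Intg W Of (Xvec l) := fun l => Intg_S SO (Sp_X l).
have IEX : forall l, Intg W Ef (Xvec l) := fun l => Intg_S SE (Sp_X l).
have ipO : forall l, ip W Of (Xvec l) = \sum_(k < m.+1) Go k *m ip W (Xvec k) (Xvec l).
  move=> l; exact: (Lin1 (k := fun k => k.+1) (h := fun k => Xvec k) Go
    (fun k _ => Intg_S (Sp_X k) (Sp_X l))).2.
have ipE : forall l, ip W Ef (Xvec l) = \sum_(k < m.+1) Ge k *m ip W (Xvec k) (Xvec l).
  move=> l; exact: (Lin1 (k := fun k => k.+1) (h := fun k => Xvec k) Ge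
    (fun k _ => Intg_S (Sp_X k) (Sp_X l))).2.
have OX : forall l, (l <= m)%N -> ip W Of (Xvec l) = 0.
  move=> l hl; case hp: (odd (m + l)).
    have hlm : (l < m)%N.
      rewrite ltn_neqAle hl andbT; apply/eqP => e.
      by move: hp; rewrite e addnn odd_double.
    have h1 := (Add1 (IEX l) (IOX l)).2; rewrite -PEO in h1.
    have h2 : ip W (Pvec G m) (Xvec l) = 0 by rewrite ip_sym ipXP_lt ?trmx0.
    have h3 : ip W Ef (Xvec l) = 0.
      rewrite ipE big1 // => k _; rewrite /Ge; case: ifP => hk; first by rewrite mul0mx.
      rewrite ipXX_odd ?mulmx0 //.
      by move: hk hp; rewrite !oddD; case: (odd m); case: (odd k); case: (odd l).
    by move: h1; rewrite h2 h3 add0r => <-.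
  rewrite ipO big1 // => k _; rewrite /Go; case: ifP => hk; last by rewrite mul0mx.
  rewrite ipXX_odd ?mulmx0 //.
  by move: hk hp; rewrite !oddD; case: (odd m); case: (odd k); case: (odd l).
have OP : forall j, (j <= m.+1)%N -> ip W Of (Pvec G j) = 0.
  move=> j; rewrite leq_eqVlt => /orP[/eqP -> | hj]; first exact: ipS0 SO (leqnSn m).
  rewrite (_ : Pvec G j = fun z => \sum_(l < j.+1) G j l *m Xvec l z) //.
  rewrite (Lin2 (k := fun l => l.+1) (h := fun l => Xvec l) (G j) (fun l _ => IOX l)).2.
  rewrite big1 // => l _; rewrite OX ?mul0mx //.
  exact: (leq_trans (ltn_ord l) hj).
have OXm1 : ip W Of (Xvec m.+1) = 0.
  case: (Sp_X m.+1) => C hC.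
  rewrite (_ : Xvec m.+1 = fun z => \sum_(j < m.+2) C j *m Pvec G j z); last exact: funext.
  rewrite (Lin2 (k := fun j => j.+1) (h := fun j => Pvec G j) C
    (fun j _ => Intg_S SO (Sp_P j))).2.
  by rewrite big1 // => j _; rewrite OP ?mul0mx // -ltnS.
rewrite ip_sym PEO (Add1 (IEX m.+1) (IOX m.+1)).2 OXm1 addr0 ipE big1 ?trmx0 //.
move=> k _; rewrite /Ge; case: ifP => hk; first by rewrite mul0mx.
rewrite ipXX_odd ?mulmx0 //.
by move: hk; rewrite !oddD /=; case: (odd m); case: (odd k).
Qed.


Definition shf (i : 'I_2) : nat := if val i == 0%N then 0%N else 2%N.
Definition Lm (i : 'I_2) k : 'M[R]_(k.+1, k.+3) :=
  \matrix_(a, b) ((val b == val a + shf i)%N)%:R.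

Lemma xX i k (z : R * R) : xcoord i z ^+ 2 *: Xvec k z = Lm i k *m Xvec k.+2 z.
Proof.
apply/matrixP => a c; rewrite ord1 !mxE.
have hak : (a <= k)%N by rewrite -ltnS.
have ha : (a + shf i < k.+3)%N by rewrite /shf; case: ifP => _; lia.
rewrite (bigD1 (Ordinal ha)) //= big1 ?addr0; last first.
  move=> b hb; rewrite !mxE.
  have -> : (val b == val a + shf i) = false.
    apply/negbTE; apply: contra hb => /eqP e; apply/eqP/val_inj => /=; exact: e.
  by rewrite mul0r.
rewrite !mxE eqxx mul1r /= /xcoord /shf; clear ha.
case: i => [[|[|//]] hi] /=.
  rewrite addn0 (_ : (k.+2 - a = (k - a) + 2)%N); last by lia.
  rewrite exprD; ring.
rewrite (_ : (k.+2 - (a + 2) = k - a)%N); last by lia.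
rewrite exprD; ring.
Qed.

Lemma ipT i n m : ip W (fun z => xcoord i z ^+ 2 *: Pvec G n z) (Pvec G m) =
  \sum_(k < n.+1) (G n k *m Lm i k) *m ip W (Xvec k.+2) (Pvec G m).
Proof.
rewrite (_ : (fun z => _) = fun z => \sum_(k < n.+1) (G n k *m Lm i k) *m Xvec k.+2 z).
  exact: (Lin1 (k := fun k => k.+3) (h := fun k => Xvec k.+2)
    (fun k => G n k *m Lm i k) (fun k _ => @Intg_XP k.+2 m)).2.
apply/funext => z; rewrite /Pvec scaler_sumr; apply: eq_bigr => k _.
by rewrite scalemxAr xX mulmxA.
Qed.

Lemma ipT_sym i n m : ip W (fun z => xcoord i z ^+ 2 *: Pvec G n z) (Pvec G m) =
  (ip W (fun z => xcoord i z ^+ 2 *: Pvec G m z) (Pvec G n))^T.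
Proof.
apply/matrixP => a b; rewrite !mxE; congr (Jw W _); apply/funext => z.
rewrite !mxE; ring.
Qed.

Lemma ipXP2 m : ip W (Xvec m.+2) (Pvec G m) =
  - (invmx (G m.+2 m.+2) *m G m.+2 m) *m invmx (G m m).
Proof.
have hne : m.+2 != m by rewrite gtn_eqF.
rewrite ipX_expand ip_PPne // mulmx0 add0r !big_ord_recr /= big1 ?add0r; last first.
  by move=> l _; rewrite ipXP_lt ?mulmx0.
by rewrite ipXP_eq ipXP_par mulmx0 addr0.
Qed.

Lemma main_lemma (F : forall (n m : nat) (i : 'I_2), 'M[R]_(n.+1, m.+1))
  (hF : forall (n : nat) (i : 'I_2) (z : R * R),
      xcoord i z ^+ 2 *: Pvec G n z
      = \sum_(m < n.+3) (F n m i *m Pvec G m z))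
  (n : nat) (hn : (2 <= n)%N) (i : 'I_2) :
  F n n i =
    G n (n - 2)%N *m invmx (G (n - 2)%N (n - 2)%N) *m (F n (n - 2)%N i)^T
    - F n (n + 2)%N i *m G (n + 2)%N n *m invmx (G n n).
Proof.
case: n hn => [|[|p]] // _.
rewrite !subSS subn0 addn2.
have Fv0 : forall n' m, (m < n'.+3)%N ->
    F n' m i = ip W (fun z => xcoord i z ^+ 2 *: Pvec G n' z) (Pvec G m).
  move=> n' m hm; symmetry; apply: (ipS_coef (D := fun j => F n' j i)) hm.
  exact: hF.
have Fv : forall n' m, (m < n'.+3)%N -> F n' m i =
    \sum_(k < n'.+1) (G n' k *m Lm i k) *m ip W (Xvec k.+2) (Pvec G m).
  by move=> n' m hm; rewrite -ipT Fv0.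
have F1 : F p.+2 p.+2 i = G p.+2 p *m Lm i p *m invmx (G p.+2 p.+2) +
    G p.+2 p.+2 *m Lm i p.+2 *m
      (- (invmx (G p.+4 p.+4) *m G p.+4 p.+2) *m invmx (G p.+2 p.+2)).
  rewrite Fv; last by lia.
  rewrite !big_ord_recr /= big1 ?add0r; last first.
    by move=> k _ /=; rewrite ipXP_lt ?mulmx0 //; have := ltn_ord k; lia.
  by rewrite ipXP_eq ipXP_par mulmx0 addr0 ipXP2.
have F3 : (F p.+2 p i)^T = G p p *m Lm i p *m invmx (G p.+2 p.+2).
  have -> : (F p.+2 p i)^T = F p p.+2 i.
    by rewrite Fv0; [rewrite Fv0; [rewrite -ipT_sym|lia]|lia].
  rewrite Fv; last by lia.
  rewrite big_ord_recr /= big1 ?add0r; last first.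
    by move=> k _ /=; rewrite ipXP_lt ?mulmx0 //; have := ltn_ord k; lia.
  by rewrite ipXP_eq.
have F4 : F p.+2 p.+4 i = G p.+2 p.+2 *m Lm i p.+2 *m invmx (G p.+4 p.+4).
  rewrite Fv; last by lia.
  rewrite big_ord_recr /= big1 ?add0r; last first.
    by move=> k _ /=; rewrite ipXP_lt ?mulmx0 //; have := ltn_ord k; lia.
  by rewrite ipXP_eq.
rewrite F1 F3 F4 !mulmxA (mulmxKV (hGinv p)).
by rewrite mulmxN mulNmx !mulmxA.
Qed.

End Orth.
Unset Implicit Arguments.
Local Close Scope classical_set_scope.

Theorem corollary4p6 (R : realType) (a40 a22 a04 a20 a02 : R)
  (h40 : 0 <= a40) (h22 : 0 <= a22) (h04 : 0 <= a04)
  (h1 : 0 < a40 + a22) (h2 : 0 < a22 + a04)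
  (G : coefFamily R)
  (hGinv : forall n : nat, G n n \in unitmx)
  (hON : orthonormal_system (freud_W a40 a22 a04 a20 a02) G)
  (F : forall (n m : nat) (i : 'I_2), 'M[R]_(n.+1, m.+1))
  (hF : forall (n : nat) (i : 'I_2) (z : R * R),
      xcoord i z ^+ 2 *: Pvec G n z
      = \sum_(m < n.+3) (F n m i *m Pvec G m z))
  (n : nat) (hn : (2 <= n)%N) (i : 'I_2) :
  F n n i =
    G n (n - 2)%N *m invmx (G (n - 2)%N (n - 2)%N) *m (F n (n - 2)%N i)^T
    - F n (n + 2)%N i *m G (n + 2)%N n *m invmx (G n n).
Proof.
apply: (main_lemma hON hGinv _ hF hn i).
move=> z; rewrite /freud_W /freud_q /=; congr (expR (- _)); ring.
Qed.
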